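(* For $i\in\{1,2\}$, let $G_i$ be a graph with maximum degree $\Delta_i$ and degeneracy $d_i$ that contains $K_{s_i,t_i}$ as a subgraph, where $1\leq s_i\leq t_i$. Let $$f(s_1,t_1,s_2,t_2):=\max\{s_1+s_2+s_1s_2,\ \min\{t_1+t_2,\ s_1(t_2+1),\ s_2(t_1+1)\},\ \min\{s_1t_2,\ s_2t_1\}\}.$$ Then $$\max\{d_1+d_2+d_1d_2,\ f(s_1,t_1,s_2,t_2),\ \min\{\Delta_1,\Delta_2\}+1\}\ \leq\ \operatorname{degen}(G_1\boxtimes G_2)\ \leq\ d_1+d_2+\min\{d_1\Delta_2,\ d_2\Delta_1\}.$$
   Context: The degeneracy $\operatorname{degen}(G)$ of a graph $G$ is the minimum integer $d$ such that every subgraph of $G$ has minimum degree at most $d$. The strong product $G_1 \boxtimes G_2$ has vertex set $V(G_1)\times V(G_2)$, with distinct vertices $(a,v),(b,u)$ adjacent iff ($a=b$ or $ab\in E(G_1)$) and ($u=v$ or $uv\in E(G_2)$). *)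

(* Defs.v *)
From mathcomp Require Import all_boot all_order.
Set Implicit Arguments. Unset Strict Implicit. Unset Printing Implicit Defensive.

Section Graphs.
Variable T : finType.

Definition simple_graph (e : rel T) := symmetric e /\ irreflexive e.

Definition sdeg (e' : rel T) (S : {set T}) (v : T) : nat := #|[set u in S | e' v u]|.

Definition is_subgraph_edges (e : rel T) (E : {set T * T}) : bool :=
  [forall u, forall v, ((u, v) \in E) ==> e u v && ((v, u) \in E)].

Definition degen_ok (e : rel T) (d : nat) : bool :=
  [forall S : {set T}, forall E : {set T * T},
     ((S != set0) && is_subgraph_edges e E) ==>
     [exists v in S, #|[set u in S | (v, u) \in E]| <= d]].

Lemma degen_ok_exists (e : rel T) : exists d, degen_ok e d.
Proof.
exists #|T|; apply/forallP => S; apply/forallP => E; apply/implyP => /andP[/set0Pn [v vS] _].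
by apply/existsP; exists v; rewrite vS max_card.
Qed.

Definition degen (e : rel T) : nat := ex_minn (degen_ok_exists e).

Definition maxdeg (e : rel T) : nat := \max_(v : T) #|[set u | e v u]|.

Definition contains_Kst (e : rel T) (s t : nat) : Prop :=
  exists (A B : {set T}), [/\ #|A| = s, #|B| = t, [disjoint A & B] &
    forall a b, a \in A -> b \in B -> e a b].
End Graphs.

Definition strong_prod (T1 T2 : finType) (e1 : rel T1) (e2 : rel T2) : rel (T1 * T2) :=
  fun x y => [&& x != y, (x.1 == y.1) || e1 x.1 y.1 & (x.2 == y.2) || e2 x.2 y.2].

Definition fst_bound (s1 t1 s2 t2 : nat) : nat :=
  maxn (s1 + s2 + s1 * s2)
       (maxn (minn (t1 + t2) (minn (s1 * t2.+1) (s2 * t1.+1)))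
             (minn (s1 * t2) (s2 * t1))).

(* Main.v *)
Require Import Defs.
From mathcomp Require Import all_boot all_order.
From mathcomp Require Import zify.
Set Implicit Arguments. Unset Strict Implicit. Unset Printing Implicit Defensive.

Section Basic.
Variable T : finType.
Implicit Types (e : rel T).

Lemma degen_okP e : degen_ok e (degen e).
Proof. rewrite /degen; by case: ex_minnP. Qed.

Lemma degen_min e d : degen_ok e d -> degen e <= d.
Proof. rewrite /degen; case: ex_minnP => m _ H; exact: H. Qed.

Lemma lb_degen e k (S : {set T}) (E : {set T * T}) :
  S != set0 -> is_subgraph_edges e E ->
  (forall v, v \in S -> k <= #|[set u in S | (v, u) \in E]|) -> k <= degen e.
Proof.
move=> SP EP H.
have := degen_okP e => /forallP/(_ S)/forallP/(_ E)/implyP.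
rewrite SP EP => /(_ isT) /existsP [v /andP [vS Hv]].
exact: leq_trans (H v vS) Hv.
Qed.

Definition Efull e : {set T * T} := [set p | e p.1 p.2].

Lemma Efull_sub e : symmetric e -> is_subgraph_edges e (Efull e).
Proof.
move=> sy; apply/forallP => u; apply/forallP => v; apply/implyP.
by rewrite !inE /= => H; rewrite H sy H.
Qed.

Lemma sub_edge e E u v : is_subgraph_edges e E -> (u, v) \in E -> e u v && ((v, u) \in E).
Proof. by move=> /forallP/(_ u)/forallP/(_ v)/implyP; apply. Qed.

Lemma degen_witness e (x0 : T) : irreflexive e -> exists S E,
  [/\ S != set0, is_subgraph_edges e E &
     forall v, v \in S -> degen e <= #|[set u in S | (v, u) \in E]|].
Proof.
move=> irr.
case Hd: (degen e) => [|n].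
  exists [set x0], set0; split => //.
  - by apply/set0Pn; exists x0; rewrite inE.
  - by apply/forallP => u; apply/forallP => v; rewrite inE.
have : ~~ degen_ok e n.
  apply/negP => /degen_min; rewrite Hd; lia.
rewrite /degen_ok negb_forall => /existsP [S].
rewrite negb_forall => /existsP [E].
rewrite negb_imply => /andP [/andP [SP EP]].
rewrite negb_exists => /forallP H.
exists S, E; split => // v vS.
have := H v; rewrite vS /= -ltnNge; done.
Qed.

Lemma s_le_degen e (s t : nat) : symmetric e -> s <= t -> contains_Kst e s t -> 1 <= s -> s <= degen e.
Proof.
move=> sy st [A [B [cA cB dAB cpl]]] s1.
apply: (@lb_degen e s (A :|: B) (Efull e)).
- have /card_gt0P [a aA] : 0 < #|A| by rewrite cA.
  by apply/set0Pn; exists a; rewrite inE aA.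
- exact: Efull_sub.
move=> v; rewrite inE => /orP [vA|vB].
  apply: (leq_trans st); rewrite -cB; apply: subset_leq_card.
  by apply/subsetP => u uB; rewrite !inE uB orbT /= cpl.
rewrite -cA; apply: subset_leq_card.
by apply/subsetP => u uA; rewrite !inE uA /= sy cpl.
Qed.
End Basic.

Section Prod.
Variables (T1 T2 : finType) (e1 : rel T1) (e2 : rel T2).
Hypotheses (g1 : simple_graph e1) (g2 : simple_graph e2).

Definition pE (E1 : {set T1 * T1}) (E2 : {set T2 * T2}) (S : {set T1 * T2})
  : {set (T1 * T2) * (T1 * T2)} :=
  [set p | [&& p.1 \in S, p.2 \in S, p.1 != p.2,
     (p.1.1 == p.2.1) || ((p.1.1, p.2.1) \in E1) &
     (p.1.2 == p.2.2) || ((p.1.2, p.2.2) \in E2)]].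

Lemma pE_sub E1 E2 S : is_subgraph_edges e1 E1 -> is_subgraph_edges e2 E2 ->
  is_subgraph_edges (strong_prod e1 e2) (pE E1 E2 S).
Proof.
move=> H1 H2; apply/forallP => [[u1 u2]]; apply/forallP => [[v1 v2]]; apply/implyP.
rewrite !inE /= => /and5P [uS vS uv c1 c2].
have vu : (v1, v2) != (u1, u2) by rewrite eq_sym.
rewrite /strong_prod uS vS uv vu /=.
case/orP: c1 => [/eqP -> | /(sub_edge H1) /andP [-> ->]]; rewrite ?eqxx ?orbT //=;
case/orP: c2 => [/eqP -> | /(sub_edge H2) /andP [-> ->]]; by rewrite ?eqxx ?orbT.
Qed.


Definition nbr (E1 : {set T1 * T1}) (E2 : {set T2 * T2}) (x u : T1 * T2) :=
  ((x.1 == u.1) || ((x.1, u.1) \in E1)) && ((x.2 == u.2) || ((x.2, u.2) \in E2)).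

Lemma pE_deg E1 E2 (S : {set T1 * T2}) x (P : {set T1 * T2}) : x \in S -> P \subset S ->
  (forall u, u \in P -> nbr E1 E2 x u) ->
  #|P :\ x| <= #|[set u in S | (x, u) \in pE E1 E2 S]|.
Proof.
move=> xS PS H; apply: subset_leq_card; apply/subsetP => u.
rewrite !inE => /andP [ux uP].
have uS : u \in S by apply: (subsetP PS).
by rewrite uS xS eq_sym ux; have := H u uP; rewrite /nbr.
Qed.

Lemma prod_lb E1 E2 (S : {set T1 * T2}) k : S != set0 ->
  is_subgraph_edges e1 E1 -> is_subgraph_edges e2 E2 ->
  (forall x, x \in S -> exists P : {set T1 * T2},
     [/\ P \subset S, forall u, u \in P -> nbr E1 E2 x u & k <= #|P :\ x|]) ->
  k <= degen (strong_prod e1 e2).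
Proof.
move=> SP H1 H2 H.
apply: (lb_degen SP (pE_sub S H1 H2)) => x xS.
have [P [PS Pn kP]] := H x xS.
exact: leq_trans kP (pE_deg xS PS Pn).
Qed.
End Prod.

Lemma cardD1_notin (T : finType) (P : {set T}) x : x \notin P -> #|P :\ x| = #|P|.
Proof. by move=> xP; rewrite [in RHS](cardsD1 x) (negbTE xP). Qed.

Section Bicl.
Variables (T1 T2 : finType) (e1 : rel T1) (e2 : rel T2).
Hypotheses (g1 : simple_graph e1) (g2 : simple_graph e2).
Variables (A1 B1 : {set T1}) (A2 B2 : {set T2}).
Hypotheses (d1 : [disjoint A1 & B1]) (d2 : [disjoint A2 & B2]).
Hypotheses (c1 : forall a b, a \in A1 -> b \in B1 -> e1 a b)
           (c2 : forall a b, a \in A2 -> b \in B2 -> e2 a b).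
Hypotheses (nA1 : 0 < #|A1|) (nB1 : 0 < #|B1|) (nA2 : 0 < #|A2|) (nB2 : 0 < #|B2|).

Let c1' a b : a \in A1 -> b \in B1 -> e1 b a.
Proof. by move=> *; rewrite (proj1 g1) c1. Qed.
Let c2' a b : a \in A2 -> b \in B2 -> e2 b a.
Proof. by move=> *; rewrite (proj1 g2) c2. Qed.

Lemma term3 : minn (#|A1| * #|B2|) (#|A2| * #|B1|) <= degen (strong_prod e1 e2).
Proof.
have /card_gt0P [a1 a1A] := nA1; have /card_gt0P [b2 b2B] := nB2.
apply: (@prod_lb _ _ _ _ (Efull e1) (Efull e2) (setX A1 B2 :|: setX B1 A2)).
- by apply/set0Pn; exists (a1, b2); rewrite !inE a1A b2B.
- exact: Efull_sub (proj1 g1).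
- exact: Efull_sub (proj1 g2).
move=> [x1 x2]; rewrite !inE /= => /orP [/andP [xA xB] | /andP [xB xA]].
  exists (setX B1 A2); split.
  - by apply/subsetP => u uP; rewrite inE uP orbT.
  - by move=> [u1 u2]; rewrite /nbr !inE /= => /andP [u1B u2A]; rewrite c1 // c2' // !orbT.
  rewrite cardD1_notin ?cardsX; first lia.
  by rewrite inE /= (disjointFr d1 xA).
exists (setX A1 B2); split.
- by apply/subsetP => u uP; rewrite inE uP.
- by move=> [u1 u2]; rewrite /nbr !inE /= => /andP [u1A u2B]; rewrite c1' // c2 // !orbT.
rewrite cardD1_notin ?cardsX; first lia.
by rewrite inE /= (disjointFl d1 xB).
Qed.

Lemma term2 : minn (#|B1| + #|B2|) (minn (#|A1| * #|B2|.+1) (#|A2| * #|B1|.+1))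
  <= degen (strong_prod e1 e2).
Proof.
have /card_gt0P [a1 a1A] := nA1; have /card_gt0P [a2 a2A] := nA2.
apply: (@prod_lb _ _ _ _ (Efull e1) (Efull e2)
   (setX A1 (A2 :|: B2) :|: setX (A1 :|: B1) A2)).
- by apply/set0Pn; exists (a1, a2); rewrite !inE a1A a2A.
- exact: Efull_sub (proj1 g1).
- exact: Efull_sub (proj1 g2).
move=> [x1 x2]; rewrite !inE /= => H.
have : [|| (x1 \in A1) && (x2 \in A2), (x1 \in A1) && (x2 \in B2) | (x1 \in B1) && (x2 \in A2)].
  move: H; case: (x1 \in A1); case: (x2 \in A2); case: (x2 \in B2); case: (x1 \in B1) => /=; done.
case/or3P => /andP [xa xb].
- exists (setX [set x1] B2 :|: setX B1 [set x2]); split.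
  + apply/subsetP => [[u1 u2]]; rewrite !inE /= => /orP [/andP [/eqP -> ->]|/andP [-> /eqP ->]].
      by rewrite xa !orbT.
    by rewrite xb !orbT.
  + move=> [u1 u2]; rewrite /nbr !inE /= => /orP [/andP [/eqP <- u2B]|/andP [u1B /eqP <-]].
      by rewrite eqxx c2 // orbT.
    by rewrite eqxx c1 // !orbT.
  rewrite cardD1_notin; last by rewrite !inE /= (disjointFr d2 xb) (disjointFr d1 xa) !andbF.
  rewrite cardsU !cardsX !cards1.
  have -> : #|setX [set x1] B2 :&: setX B1 [set x2]| = 0.
    apply/eqP; rewrite cards_eq0; apply/eqP/setP => [[u1 u2]]; rewrite !inE /=.
    by case E: (u1 == x1) => //; rewrite (eqP E) (disjointFr d1 xa) !andbF.
  lia.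
- exists (setX (x1 |: B1) A2); split.
  + apply/subsetP => [[u1 u2]]; rewrite !inE /=.
    by case/andP => [/orP [/eqP ->|->] ->]; rewrite ?xa ?xb /= ?orbT ?andbT.
  + move=> [u1 u2]; rewrite /nbr !inE /= => /andP [/orP [/eqP <-|u1B] u2A].
      by rewrite eqxx c2' // orbT.
    by rewrite c1 // c2' // !orbT.
  rewrite cardD1_notin; last by rewrite !inE /= (disjointFl d2 xb) andbF.
  rewrite cardsX cardsU1 (disjointFr d1 xa) /=.
  lia.
- exists (setX A1 (x2 |: B2)); split.
  + apply/subsetP => [[u1 u2]]; rewrite !inE /=.
    by case/andP => [-> /orP [/eqP ->|->]]; rewrite ?xa ?xb /= ?orbT ?andbT.
  + move=> [u1 u2]; rewrite /nbr !inE /= => /andP [u1A /orP [/eqP <-|u2B]].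
      by rewrite eqxx c1' // orbT.
    by rewrite c1' // c2 // !orbT.
  rewrite cardD1_notin; last by rewrite !inE /= (disjointFl d1 xa).
  rewrite cardsX cardsU1 (disjointFr d2 xb) /=.
  lia.
Qed.
End Bicl.

Section Prod2.
Variables (T1 T2 : finType) (e1 : rel T1) (e2 : rel T2).
Hypotheses (g1 : simple_graph e1) (g2 : simple_graph e2).

Lemma notin_nbrs (T : finType) (e : rel T) (E : {set T * T}) (S : {set T}) y :
  irreflexive e -> is_subgraph_edges e E -> y \notin [set u in S | (y, u) \in E].
Proof.
move=> irr H; rewrite inE; apply/negP => /andP [_ /(sub_edge H) /andP [h _]].
by rewrite irr in h.
Qed.

Lemma dterm (z1 : T1) (z2 : T2) :
  degen e1 + degen e2 + degen e1 * degen e2 <= degen (strong_prod e1 e2).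
Proof.
have [S1 [E1 [S1P E1P H1]]] := degen_witness z1 (proj2 g1).
have [S2 [E2 [S2P E2P H2]]] := degen_witness z2 (proj2 g2).
apply: (@prod_lb _ _ _ _ E1 E2 (setX S1 S2)) => //.
- case/set0Pn: S1P => a aS; case/set0Pn: S2P => b bS.
  by apply/set0Pn; exists (a, b); rewrite inE aS bS.
move=> [y1 y2]; rewrite inE /= => /andP [yS1 yS2].
exists (setX (y1 |: [set u in S1 | (y1, u) \in E1]) (y2 |: [set u in S2 | (y2, u) \in E2])).
split.
- apply/subsetP => [[u1 u2]]; rewrite !inE /=.
  by case/andP => [/orP [/eqP ->|/andP [-> _]] /orP [/eqP ->|/andP [-> _]]]; rewrite ?yS1 ?yS2.
- move=> [u1 u2]; rewrite /nbr !inE /=.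
  case/andP => [/orP [/eqP ->|/andP [_ ->]] /orP [/eqP ->|/andP [_ ->]]];
  by rewrite ?eqxx ?orbT.
have := cardsD1 (y1, y2) (setX (y1 |: [set u in S1 | (y1, u) \in E1]) (y2 |: [set u in S2 | (y2, u) \in E2])).
rewrite cardsX !cardsU1 (notin_nbrs S1 y1 (proj2 g1) E1P) (notin_nbrs S2 y2 (proj2 g2) E2P) !inE !eqxx /=.
have := H1 y1 yS1; have := H2 y2 yS2.
set n1 := #|[set u in S1 | _]|; set n2 := #|[set u in S2 | _]|; set m := #|_ :\ _|.
move=> h2 h1 eq.
have : degen e1 * degen e2 <= n1 * n2 by apply: leq_mul.
nia.
Qed.
End Prod2.

Section Upper.
Variables (T1 T2 : finType) (e1 : rel T1) (e2 : rel T2).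
Hypotheses (g1 : simple_graph e1) (g2 : simple_graph e2).

Lemma maxdeg_ge (T : finType) (e : rel T) v : #|[set u | e v u]| <= maxdeg e.
Proof. rewrite /maxdeg; exact: (@leq_bigmax T (fun v => #|[set u | e v u]|) v). Qed.

Lemma cardU_le (T : finType) (A B : {set T}) : #|A :|: B| <= #|A| + #|B|.
Proof. rewrite cardsU; lia. Qed.

Lemma ub1 : degen_ok (strong_prod e1 e2) (degen e2 + degen e1 * (maxdeg e2).+1).
Proof.
apply/forallP => S; apply/forallP => E; apply/implyP => /andP [SP EP].
set S1 := [set x.1 | x in S].
have S1P : S1 != set0.
  by case/set0Pn: SP => x xS; apply/set0Pn; exists x.1; apply: imset_f.
have /existsP [a /andP [aS1 Ha]] := implyP (forallP (forallP (degen_okP e1) S1) (Efull e1))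
  (introT andP (conj S1P (Efull_sub (proj1 g1)))).
case/imsetP: aS1 => x0 x0S ax0.
set S2 := [set y | (a, y) \in S].
have S2P : S2 != set0.
  by apply/set0Pn; exists x0.2; rewrite inE ax0 -surjective_pairing.
have /existsP [b /andP [bS2 Hb]] := implyP (forallP (forallP (degen_okP e2) S2) (Efull e2))
  (introT andP (conj S2P (Efull_sub (proj1 g2)))).
have abS : (a, b) \in S by rewrite inE in bS2.
apply/existsP; exists (a, b); rewrite abS /=.
set Y2 := [set u in S2 | (b, u) \in Efull e2].
set X1 := [set u in S1 | (a, u) \in Efull e1].
have sub : [set u in S | (a, b, u) \in E] \subset
    setX [set a] Y2 :|: setX X1 (b |: [set u | e2 b u]).
  apply/subsetP => [[u1 u2]]; rewrite inE => /andP [uS /(sub_edge EP) /andP [sp _]].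
  move: sp; rewrite /strong_prod /= => /and3P [neq h1 h2].
  case/orP: h1 => [/eqP au1 | ea].
    subst u1.
    have bu : b != u2 by apply: contra neq => /eqP ->.
    rewrite (negbTE bu) /= in h2.
    by rewrite !inE eqxx /= uS h2.
  have u1S1 : u1 \in S1 by apply/imsetP; exists (u1, u2).
  rewrite !inE u1S1 ea /= orbC; apply/orP; left.
  by case/orP: h2 => [/eqP -> | ->]; rewrite ?eqxx ?orbT.
apply: (leq_trans (subset_leq_card sub)); apply: (leq_trans (cardU_le _ _)).
rewrite !cardsX cards1 cardsU1.
have := maxdeg_ge e2 b.
have : #|X1| <= degen e1 by [].
have : #|Y2| <= degen e2 by [].
set m := #|[set u | e2 b u]|.
move=> hY hX hm.
have : #|X1| * ((b \notin [set u | e2 b u]) + m) <= degen e1 * (maxdeg e2).+1.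
  apply: leq_mul => //; case: (b \notin _) => /=; lia.
lia.
Qed.

Lemma ub2 : degen_ok (strong_prod e1 e2) (degen e1 + degen e2 * (maxdeg e1).+1).
Proof.
apply/forallP => S; apply/forallP => E; apply/implyP => /andP [SP EP].
set S2 := [set x.2 | x in S].
have S2P : S2 != set0.
  by case/set0Pn: SP => x xS; apply/set0Pn; exists x.2; apply: imset_f.
have /existsP [b /andP [bS2 Hb]] := implyP (forallP (forallP (degen_okP e2) S2) (Efull e2))
  (introT andP (conj S2P (Efull_sub (proj1 g2)))).
case/imsetP: bS2 => x0 x0S bx0.
set S1 := [set y | (y, b) \in S].
have S1P : S1 != set0.
  by apply/set0Pn; exists x0.1; rewrite inE bx0 -surjective_pairing.
have /existsP [a /andP [aS1 Ha]] := implyP (forallP (forallP (degen_okP e1) S1) (Efull e1))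
  (introT andP (conj S1P (Efull_sub (proj1 g1)))).
have abS : (a, b) \in S by rewrite inE in aS1.
apply/existsP; exists (a, b); rewrite abS /=.
set Y2 := [set u in S2 | (b, u) \in Efull e2].
set X1 := [set u in S1 | (a, u) \in Efull e1].
have sub : [set u in S | (a, b, u) \in E] \subset
    setX X1 [set b] :|: setX (a |: [set u | e1 a u]) Y2.
  apply/subsetP => [[u1 u2]]; rewrite inE => /andP [uS /(sub_edge EP) /andP [sp _]].
  move: sp; rewrite /strong_prod /= => /and3P [neq h1 h2].
  case/orP: h2 => [/eqP bu2 | eb].
    subst u2.
    have au : a != u1 by apply: contra neq => /eqP ->.
    rewrite (negbTE au) /= in h1.
    by rewrite !inE eqxx /= uS h1.
  have u2S2 : u2 \in S2 by apply/imsetP; exists (u1, u2).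
  rewrite !inE u2S2 eb /= andbT orbC; apply/orP; left.
  by case/orP: h1 => [/eqP -> | ->]; rewrite ?eqxx ?orbT.
apply: (leq_trans (subset_leq_card sub)); apply: (leq_trans (cardU_le _ _)).
rewrite !cardsX cards1 cardsU1.
have := maxdeg_ge e1 a.
have : #|X1| <= degen e1 by [].
have : #|Y2| <= degen e2 by [].
set m := #|[set u | e1 a u]|.
move=> hY hX hm.
have : ((a \notin [set u | e1 a u]) + m) * #|Y2| <= degen e2 * (maxdeg e1).+1.
  rewrite mulnC; apply: leq_mul => //; case: (a \notin _) => /=; lia.
lia.
Qed.
End Upper.

Lemma star_disj (T : finType) (e : rel T) v : irreflexive e -> [disjoint [set v] & [set u | e v u]].
Proof.
move=> irr; apply/pred0P => u /=; rewrite !inE.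
by case: eqP => // ->; rewrite irr.
Qed.

Lemma maxdeg_pos (T : finType) (e : rel T) a b : e a b -> 0 < maxdeg e.
Proof.
move=> eab; apply: leq_trans (maxdeg_ge e a).
by apply/card_gt0P; exists b; rewrite inE.
Qed.

Lemma maxdeg_attained (T : finType) (e : rel T) (x : T) : exists v, #|[set u | e v u]| = maxdeg e.
Proof.
have T0 : 0 < #|T| by apply/card_gt0P; exists x.
have [v Hv] := @eq_bigmax T (fun v => #|[set u | e v u]|) T0.
by exists v; rewrite /maxdeg Hv.
Qed.

Theorem mainTheorem7 (T1 T2 : finType) (e1 : rel T1) (e2 : rel T2)
    (s1 t1 s2 t2 : nat) :
  simple_graph e1 -> simple_graph e2 ->
  1 <= s1 -> s1 <= t1 -> 1 <= s2 -> s2 <= t2 ->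
  contains_Kst e1 s1 t1 -> contains_Kst e2 s2 t2 ->
  let d1 := degen e1 in let d2 := degen e2 in
  let D1 := maxdeg e1 in let D2 := maxdeg e2 in
  maxn (d1 + d2 + d1 * d2) (maxn (fst_bound s1 t1 s2 t2) (minn D1 D2).+1)
    <= degen (strong_prod e1 e2)
  /\ degen (strong_prod e1 e2) <= d1 + d2 + minn (d1 * D2) (d2 * D1).
Proof.
move=> g1 g2 hs1 st1 hs2 st2 K1 K2 d1 d2 D1 D2.
subst d1 d2 D1 D2.
have sd1 := s_le_degen (proj1 g1) st1 K1 hs1.
have sd2 := s_le_degen (proj1 g2) st2 K2 hs2.
case: K1 => [A1 [B1 [cA1 cB1 dj1 cp1]]].
case: K2 => [A2 [B2 [cA2 cB2 dj2 cp2]]].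
have nA1 : 0 < #|A1| by rewrite cA1.
have nA2 : 0 < #|A2| by rewrite cA2.
have nB1 : 0 < #|B1| by rewrite cB1; lia.
have nB2 : 0 < #|B2| by rewrite cB2; lia.
have /card_gt0P [a1 a1A] := nA1.
have /card_gt0P [a2 a2A] := nA2.
have /card_gt0P [b1 b1B] := nB1.
have /card_gt0P [b2 b2B] := nB2.
have hd := dterm g1 g2 a1 a2.
have h2 := term2 g1 g2 dj1 dj2 cp1 cp2 nA1 nB1 nA2 nB2.
have h3 := term3 g1 g2 dj1 dj2 cp1 cp2 nA1 nB1 nA2 nB2.
rewrite cA1 cA2 cB1 cB2 in h2 h3.
have [v1 Hv1] := maxdeg_attained e1 a1.
have [v2 Hv2] := maxdeg_attained e2 a2.
have P1 : 0 < maxdeg e1 := maxdeg_pos (cp1 a1 b1 a1A b1B).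
have P2 : 0 < maxdeg e2 := maxdeg_pos (cp2 a2 b2 a2A b2B).
have hD := term2 g1 g2 (star_disj v1 (proj2 g1)) (star_disj v2 (proj2 g2))
  (fun a b ha hb => ltac:(by move: ha hb; rewrite !inE => /eqP ->))
  (fun a b ha hb => ltac:(by move: ha hb; rewrite !inE => /eqP ->))
  (ltac:(by rewrite cards1)) (ltac:(by rewrite Hv1))
  (ltac:(by rewrite cards1)) (ltac:(by rewrite Hv2)).
rewrite !cards1 Hv1 Hv2 in hD.
have u1 := degen_min (ub1 g1 g2).
have u2 := degen_min (ub2 g1 g2).
have m12 : s1 * s2 <= degen e1 * degen e2 by apply: leq_mul.
rewrite /fst_bound.
split; lia.
Qed.
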